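(* Let $\epsilon=(\epsilon_n)$ and $\epsilon'=(\epsilon'_n)$ be sequences with $0<\epsilon_n,\epsilon'_n\le1$. Then $A^\epsilon\subseteq A^{\epsilon'}$ if and only if there exists $C>0$ with $\epsilon'_n\le C\epsilon_n$ for all $n$. In particular, $A^\epsilon=A^{\epsilon'}$ if and only if there exists $C>0$ with $C^{-1}\epsilon_n\le\epsilon'_n\le C\epsilon_n$ for all $n$.
   Context: For a sequence $\epsilon=(\epsilon_n)$ in $(0,1]$, $A^\epsilon=\{(x_n)\in\mathbb{C}^{\mathbb{N}}:\sup_n|x_n|^{\epsilon_n}<\infty\}$, where $|\cdot|$ is the Euclidean norm on $\mathbb{C}$. *)

(* Defs.v *)
From Stdlib Require Import Reals.
From Coquelicot Require Import Coquelicot.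
Open Scope R_scope.

(* real power a^e for a >= 0, e > 0, with the convention 0^e = 0
   (Stdlib's Rpower 0 e would give 1, which is wrong). *)
Definition rpow (a e : R) : R := if Req_EM_T a 0 then 0 else Rpower a e.

Definition A_eps (eps : nat -> R) (x : nat -> C) : Prop :=
  exists M : R, forall n : nat, rpow (Cmod (x n)) (eps n) <= M.

Definition admissible (eps : nat -> R) : Prop :=
  forall n : nat, 0 < eps n <= 1.

(* Main.v *)
Require Import Defs.
From Stdlib Require Import Reals Lra.
From Coquelicot Require Import Coquelicot.
Open Scope R_scope.

Lemma exple (a b : R) : a <= b -> exp a <= exp b.
Proof. intros [H|H]. left; apply exp_increasing; auto. subst; lra. Qed.

Lemma Cmod_ge0 (z : C) : 0 <= Cmod z.
Proof. apply Cmod_ge_0. Qed.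

Lemma incl_of_C (eps eps' : nat -> R) :
  admissible eps -> admissible eps' ->
  (exists C0 : R, 0 < C0 /\ forall n, eps' n <= C0 * eps n) ->
  forall x : nat -> C, A_eps eps x -> A_eps eps' x.
Proof.
  intros He He' [C0 [HC Hn]] x [M HM].
  exists (Rmax 1 (exp (C0 * ln (Rmax 1 M)))).
  intro n. specialize (HM n). specialize (Hn n).
  specialize (He n). specialize (He' n).
  unfold rpow in *. set (a := Cmod (x n)) in *.
  assert (Ha : 0 <= a) by apply Cmod_ge0.
  destruct (Req_EM_T a 0) as [E|E].
  - apply Rle_trans with 1; [lra | apply Rmax_l].
  - assert (Hp : 0 < a) by lra.
    unfold Rpower in *.
    destruct (Rle_lt_dec a 1) as [H1|H1].
    + apply Rle_trans with 1; [|apply Rmax_l].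
      rewrite <- exp_0. apply exple.
      assert (ln a <= 0) by (rewrite <- ln_1; apply ln_le; lra).
      nra.
    + apply Rle_trans with (exp (C0 * ln (Rmax 1 M))); [|apply Rmax_r].
      apply exple.
      assert (0 < ln a) by (rewrite <- ln_1; apply ln_increasing; lra).
      assert (eps n * ln a <= ln (Rmax 1 M)).
      { rewrite <- (ln_exp (eps n * ln a)). apply ln_le. apply exp_pos.
        apply Rle_trans with M; auto. apply Rmax_r. }
      apply Rle_trans with (C0 * (eps n * ln a)). nra.
      apply Rmult_le_compat_l; lra.
Qed.

Lemma C_of_incl (eps eps' : nat -> R) :
  admissible eps -> admissible eps' ->
  (forall x : nat -> C, A_eps eps x -> A_eps eps' x) ->
  (exists C0 : R, 0 < C0 /\ forall n, eps' n <= C0 * eps n).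
Proof.
  intros He He' H.
  set (x := fun n => RtoC (exp (/ eps n))).
  assert (Hx : forall e n, rpow (Cmod (x n)) e = exp (e * / eps n)).
  { intros e n. unfold x, rpow. rewrite Cmod_R, Rabs_pos_eq.
    2: left; apply exp_pos.
    destruct (Req_EM_T (exp (/ eps n)) 0) as [E|E].
    - pose proof (exp_pos (/ eps n)); lra.
    - unfold Rpower. rewrite ln_exp. reflexivity. }
  destruct (H x) as [M HM].
  { exists (exp 1). intro n. rewrite Hx. rewrite Rinv_r. lra.
    specialize (He n); lra. }
  exists (Rabs (ln M) + 1). split. pose proof (Rabs_pos (ln M)); lra.
  intro n. specialize (HM n). rewrite Hx in HM.
  specialize (He n). specialize (He' n).
  assert (Mp : 0 < M) by (pose proof (exp_pos (eps' n * / eps n)); lra).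
  assert (eps' n * / eps n <= ln M).
  { rewrite <- (ln_exp (eps' n * / eps n)). apply ln_le. apply exp_pos. auto. }
  assert (ln M <= Rabs (ln M)) by apply Rle_abs.
  assert (eps' n = (eps' n * / eps n) * eps n) by (field; lra).
  rewrite H2. apply Rmult_le_compat_r; lra.
Qed.

Theorem mainTheorem9 (eps eps' : nat -> R) :
  admissible eps -> admissible eps' ->
  ((forall x : nat -> C, A_eps eps x -> A_eps eps' x) <->
     (exists C0 : R, 0 < C0 /\ forall n, eps' n <= C0 * eps n)) /\
  ((forall x : nat -> C, A_eps eps x <-> A_eps eps' x) <->
     (exists C0 : R, 0 < C0 /\
        forall n, / C0 * eps n <= eps' n /\ eps' n <= C0 * eps n)).
Proof.
  intros He He'. split.
  - split. apply C_of_incl; auto. apply incl_of_C; auto.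
  - split.
    + intro H.
      destruct (C_of_incl eps eps' He He') as [C1 [HC1 H1]]. intros x; apply H.
      destruct (C_of_incl eps' eps He' He) as [C2 [HC2 H2]]. intros x; apply H.
      exists (Rmax C1 C2). split. apply Rlt_le_trans with C1; auto; apply Rmax_l.
      intro n. specialize (H1 n). specialize (H2 n).
      pose proof (Rmax_l C1 C2). pose proof (Rmax_r C1 C2).
      specialize (He n). specialize (He' n). split.
      * apply Rmult_le_reg_l with (Rmax C1 C2). lra.
        rewrite <- Rmult_assoc, Rinv_r by lra. nra.
      * nra.
    + intros [C0 [HC Hn]] x. split.
      * apply incl_of_C; auto. exists C0; split; auto. apply Hn.
      * apply incl_of_C; auto. exists C0; split; auto. intro n.
        destruct (Hn n) as [A _].
        apply Rmult_le_reg_l with (/ C0). apply Rinv_0_lt_compat; lra.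
        rewrite <- Rmult_assoc, Rinv_l by lra. lra.
Qed.
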